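(* Let $A,B\in L(\mathbb{R}^n,\mathbb{R}^n)$ be symmetric, let $I\subset\mathbb{R}$ be a non-empty open interval, and let $E:I\to L(\mathbb{R}^{n-m},\mathbb{R}^n)$ be differentiable with $E(t)$ injective for every $t\in I$. Suppose there is a differentiable $\mu:I\to\mathbb{R}$ with ${}^tE(t)BE(t)=\mu(t)\,{}^tE(t)AE(t)$ for every $t\in I$. If $\operatorname{rank}A>4m$, then $\mu$ is constant. *)

(* Defs.v *)
From HB Require Import structures.
From mathcomp Require Import all_boot all_order all_algebra.
From mathcomp Require Import all_classical all_reals all_analysis.
Set Implicit Arguments. Unset Strict Implicit. Unset Printing Implicit Defensive.
Import Order.TTheory GRing.Theory Num.Theory.
Import numFieldNormedType.Exports.

(* Main.v *)
Require Import Defs.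
From HB Require Import structures.
From mathcomp Require Import all_boot all_order all_algebra.
From mathcomp Require Import all_classical all_reals all_analysis.
From mathcomp Require Import zify.
Import Order.TTheory GRing.Theory Num.Theory.
Import numFieldNormedType.Exports.
Local Open Scope classical_set_scope.
Local Open Scope ring_scope.

Lemma is_derive_mulmx (R : realType) a b c (f : R -> 'M[R]_(a,b)) (g : R -> 'M[R]_(b,c)) (t : R) (df : 'M[R]_(a,b)) (dg : 'M[R]_(b,c)) :
 (forall i j, is_derive t 1 (fun s => f s i j) (df i j)) ->
 (forall i j, is_derive t 1 (fun s => g s i j) (dg i j)) ->
 forall i k, is_derive t 1 (fun s => (f s *m g s) i k) ((df *m g t + f t *m dg) i k).
Proof.
move=> hf hg i k.
have -> : (fun s => (f s *m g s) i k) =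
   \sum_(j < b) ((fun s => f s i j) * (fun s => g s j k)).
  by apply/funext => s; rewrite fct_sumE mxE.
apply: is_derive_eq.
rewrite !mxE big_split /= addrC; congr (_ + _); apply: eq_bigr => j _;
  by rewrite mulrC.
Qed.

Lemma inj_rank (R : realType) n k (e : 'M[R]_(n,k)) :
  injective (fun v : 'cV[R]_k => e *m v) -> \rank e = k.
Proof.
move=> inj.
have K0 : kermx e^T = 0.
  apply/row_matrixP => i; rewrite row0.
  have h : row i (kermx e^T) *m e^T = 0 by rewrite -row_mul mulmx_ker row0.
  have : e *m (row i (kermx e^T))^T = e *m 0.
    by rewrite mulmx0 -[e in e *m _]trmxK -trmx_mul h trmx0.
  by move/inj => /(congr1 trmx); rewrite trmxK trmx0.
have := mxrank_ker e^T; rewrite K0 mxrank0 mxrank_tr => h.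
have := rank_leq_col e; lia.
Qed.

Lemma rank_bound (R : realType) n k (A C : 'M[R]_n) (e D : 'M[R]_(n,k)) (c : R) :
  \rank e = k -> C^T = C -> e^T *m C *m e = 0 ->
  c *: (e^T *m A *m e) = D^T *m C *m e + e^T *m C *m D -> c != 0 ->
  (\rank A <= 4 * (n - k))%N.
Proof.
move=> re CT h0 h c0.
have rCe : (\rank (C *m e) <= n - k)%N.
  have := mxrank_mul_min e^T (C *m e); rewrite mulmxA h0 mxrank0 mxrank_tr re.
  lia.
have r1 : (\rank (D^T *m C *m e) <= n - k)%N.
  by rewrite -mulmxA (leq_trans (mxrankM_maxr _ _)).
have r2 : (\rank (e^T *m C *m D) <= n - k)%N.
  apply: leq_trans (mxrankM_maxl _ _) _.
  by rewrite -mxrank_tr trmx_mul trmxK CT.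
have r3 : (\rank (e^T *m A *m e) <= 2 * (n - k))%N.
  rewrite -(mxrank_scale_nz _ c0) h.
  apply: leq_trans (mxrank_add _ _) _; lia.
have m1 := mxrank_mul_min A e; rewrite re in m1.
have m2 := mxrank_mul_min e^T (A *m e).
rewrite mxrank_tr re mulmxA in m2.
have := rank_leq_row e; rewrite re => kn.
move: m1 m2 r3 kn; move: (\rank A) (\rank (A *m e)) (\rank (e^T *m A *m e)) => x y z.
clear; move=> *; lia.
Qed.

Lemma is_derive_uniq (R : realType) (f : R -> R) (t d1 d2 : R) :
  is_derive t 1 f d1 -> is_derive t 1 f d2 -> d1 = d2.
Proof. by case=> _ h1 [_ h2]; rewrite -h1 -h2. Qed.

Theorem lemma3p3 (R : realType) (n m : nat) (A B : 'M[R]_n)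
  (I : set R) (E : R -> 'M[R]_(n, n - m)) (mu : R -> R) :
  A^T = A -> B^T = B ->
  open I -> is_interval I -> I !=set0 ->
  (forall t, I t -> derivable E t 1) ->
  (forall t, I t -> injective (fun v : 'cV[R]_(n - m) => E t *m v)) ->
  (forall t, I t -> derivable mu t 1) ->
  (forall t, I t -> (E t)^T *m B *m E t = mu t *: ((E t)^T *m A *m E t)) ->
  (4 * m < \rank A)%N ->
  forall s t, I s -> I t -> mu s = mu t.
Proof.
move=> AT BT oI iI _ dE injE dmu eqI hr.
have D0 : forall t, I t -> 'D_1 mu t = 0.
  move=> t It.
  pose D := \matrix_(i, j) 'D_1 (fun s => E s i j) t.
  have hE : forall i j, is_derive t 1 (fun s => E s i j) (D i j).
    move=> i j; rewrite mxE; apply: derivableP.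
    exact: ((derivable_mxP _ _ _).1 (dE t It) i j).
  have hET : forall i j, is_derive t 1 (fun s => (E s)^T i j) (D^T i j).
    move=> i j; have -> : (fun s => (E s)^T i j) = (fun s => E s j i).
      by apply/funext => s; rewrite mxE.
    by rewrite mxE; exact: hE.
  have hC : forall (M : 'M[R]_n) i j,
      is_derive t 1 (fun s : R => M i j) ((0 : 'M[R]_n) i j).
    by move=> M i j; rewrite mxE; exact: is_derive_cst.
  have hF : forall M p q, is_derive t 1 (fun s => ((E s)^T *m M *m E s) p q)
      ((D^T *m M *m E t + (E t)^T *m M *m D) p q).
    move=> M p q.
    have h1 := @is_derive_mulmx R _ _ _ _ _ _ _ _ hET (hC M).
    have h2 := @is_derive_mulmx R _ _ _ _ _ _ _ _ h1 hE p q.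
    by apply: is_derive_eq h2 _; rewrite mulmx0 addr0.
  have dmut : is_derive t 1 mu ('D_1 mu t) by apply: derivableP; exact: dmu.
  have nI : \forall s \near t, I s by exact: (open_nbhs_nbhs (conj oI It)).
  set c := 'D_1 mu t in dmut *.
  have key : D^T *m B *m E t + (E t)^T *m B *m D =
      mu t *: (D^T *m A *m E t + (E t)^T *m A *m D) + c *: ((E t)^T *m A *m E t).
    apply/matrixP => p q.
    apply: (@is_derive_uniq R _ _ _ _ (hF B p q)).
    apply: (near_eq_is_derive (f := mu * (fun s => ((E s)^T *m A *m E s) p q))).
      by apply: filterS nI => s Is /=; rewrite (eqI s Is) mxE.
    apply: is_derive_eq.
    rewrite [RHS]mxE; congr (_ + _); rewrite [RHS]mxE //.
    by rewrite mulrC.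
  apply/eqP; apply: contraT => c0.
  pose C := B - mu t *: A.
  have := @rank_bound R n (n - m) A C (E t) D c (@inj_rank R _ _ _ (injE t It)).
  have -> : C^T = C by rewrite /C linearB linearZ /= AT BT.
  have -> : (E t)^T *m C *m E t = 0.
    by rewrite /C mulmxBr mulmxBl -!scalemxAr -scalemxAl eqI // subrr.
  have -> : D^T *m C *m E t + (E t)^T *m C *m D = c *: ((E t)^T *m A *m E t).
    rewrite /C !(mulmxBr, mulmxBl) -!scalemxAr -!scalemxAl.
    by rewrite addrACA -opprD -scalerDr key addrC addKr.
  move=> /(_ erefl erefl erefl c0).
  move: hr; move: (\rank A) => x; clear; move=> *; lia.
move=> s t Is It.
wlog st : s t Is It / s <= t.
  move=> h; case: (leP s t) => [|/ltW ts]; first exact: h.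
  by rewrite (h t s).
have h1 : forall x, x \in `]s, t[%R -> is_derive x 1 mu ('D_1 mu x).
  move=> x; rewrite in_itv /= => /andP[xs xt]; apply: derivableP; apply: dmu.
  by apply: (iI s t Is It); rewrite !ltW.
have h2 : {within `[s, t], continuous mu}.
  apply: derivable_within_continuous => x; rewrite in_itv /= => xin; apply: dmu.
  exact: (iI s t Is It).
have [c cin h] := @MVT_segment R mu (fun x => 'D_1 mu x) s t st h1 h2.
move: cin; rewrite in_itv /= => cin.
rewrite D0 ?mul0r in h; last exact: (iI s t Is It).
by apply/eqP; rewrite eq_sym -subr_eq0 h.
Qed.
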